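(* For an integer $n>1$ define, for every integer $1<r<n$, $$E^{BW,C}_n(r)=\frac{2r(r-1)}{n^2}\sum_{k=r+1}^{n}\frac{n-k}{(k-1)(k-2)},$$ and let $\mathcal{M}(n)$ be a value of $r$ at which $E^{BW,C}_n$ attains its maximum. Let $$\theta=-\frac{1}{2W_{-1}\!\left(-\frac{1}{2\sqrt e}\right)}=e^{\frac12+W_{-1}\left(-\frac{1}{2\sqrt e}\right)}=0.284668\dots,$$ which is the solution in $(0,1)$ of $2x\log x=x-1$. Then (i) $\lim_{n\to\infty}\mathcal{M}(n)/n=\theta$; (ii) $\lim_{n\to\infty}E^{BW,C}_n(\mathcal{M}(n))=\lim_{n\to\infty}E^{BW,C}_n(\lfloor n\theta\rfloor)=\theta(1-\theta)=0.2036321\dots$.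
   Context: $W_{-1}$ denotes the lower real branch of the Lambert $W$ function, i.e. the inverse of $z\mapsto ze^z$ on $(-\infty,-1]$, defined on $[-1/e,0)$. *)

(* Defs.v *)
From Stdlib Require Import Reals ZArith.
From Coquelicot Require Import Coquelicot.
Open Scope R_scope.

(* w is the value of the lower real branch W_{-1} at y:
   w <= -1 and w e^w = y (W_{-1} is the inverse of z |-> z e^z on (-oo,-1]). *)
Definition is_LambertWm1 (y w : R) : Prop := w <= -1 /\ w * exp w = y.

Definition E_BWC (n r : nat) : R :=
  2 * INR r * (INR r - 1) / (INR n) ^ 2 *
  sum_n_m (fun k : nat => (INR n - INR k) / ((INR k - 1) * (INR k - 2))) (S r) n.

Definition nat_floor (x : R) : nat := Z.to_nat (Int_part x).

(* Main.v *)
Require Import Defs.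
From Stdlib Require Import Reals ZArith Lra Lia.
From Coquelicot Require Import Coquelicot.
Open Scope R_scope.

Lemma ln_le_sub1 y : 0 < y -> ln y <= y - 1.
Proof. intros Hy. pose proof (exp_ineq1_le (ln y)). rewrite exp_ln in H; lra. Qed.

Lemma tele_le (a h : nat -> R) (r n : nat) : (r <= n)%nat ->
  (forall k, (S r <= k <= n)%nat -> a k <= h k - h (k - 1)%nat) ->
  sum_n_m a (S r) n <= h n - h r.
Proof.
  intros Hrn. induction n as [|n IH]; intros Ha.
  - assert (r = 0%nat) by lia. subst. rewrite sum_n_m_zero; [|lia]. simpl. unfold zero; simpl. lra.
  - destruct (Nat.eq_dec r (S n)) as [->|Hne].
    + rewrite sum_n_m_zero; [|lia]. unfold zero; simpl. lra.
    + rewrite sum_n_Sm; [|lia]. unfold plus; simpl.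
      assert (H1 := IH ltac:(lia) ltac:(intros k Hk; apply Ha; lia)).
      assert (H2 := Ha (S n) ltac:(lia)). replace (S n - 1)%nat with n in H2 by lia. lra.
Qed.

Lemma tele_ge (a h : nat -> R) (r n : nat) : (r <= n)%nat ->
  (forall k, (S r <= k <= n)%nat -> h k - h (k - 1)%nat <= a k) ->
  h n - h r <= sum_n_m a (S r) n.
Proof.
  intros Hrn. induction n as [|n IH]; intros Ha.
  - assert (r = 0%nat) by lia. subst. rewrite sum_n_m_zero; [|lia]. simpl. unfold zero; simpl. lra.
  - destruct (Nat.eq_dec r (S n)) as [->|Hne].
    + rewrite sum_n_m_zero; [|lia]. unfold zero; simpl. lra.
    + rewrite sum_n_Sm; [|lia]. unfold plus; simpl.
      assert (H1 := IH ltac:(lia) ltac:(intros k Hk; apply Ha; lia)).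
      assert (H2 := Ha (S n) ltac:(lia)). replace (S n - 1)%nat with n in H2 by lia. lra.
Qed.

Definition hU (n k : nat) : R := - ((INR n - 2) / (INR k - 1)) - ln (INR k).
Definition hL (n k : nat) : R := - ((INR n - 2) / (INR k - 1)) - ln (INR k - 1).

Lemma term_bounds (n k : nat) : (3 <= k)%nat ->
  let a := (INR n - INR k) / ((INR k - 1) * (INR k - 2)) in
  hL n k - hL n (k-1)%nat <= a /\ a <= hU n k - hU n (k-1)%nat.
Proof.
  intros Hk a. unfold hL, hU, a.
  rewrite minus_INR by lia. simpl INR.
  assert (HK : 3 <= INR k) by (replace 3 with (INR 3) by (simpl; lra); apply le_INR; lia).
  set (K := INR k) in *. set (N := INR n).
  assert (E1 : ln K - ln (K - 1) <= / (K - 1)).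
  { rewrite <- ln_div by lra. pose proof (ln_le_sub1 (K / (K-1)) ltac:(apply Rdiv_lt_0_compat; lra)).
    replace (K / (K-1) - 1) with (/ (K-1)) in H by (field; lra). lra. }
  assert (E2 : / (K - 1) <= ln (K - 1) - ln (K - 1 - 1)).
  { pose proof (ln_le_sub1 ((K-1-1) / (K-1)) ltac:(apply Rdiv_lt_0_compat; lra)).
    rewrite ln_div in H by lra.
    replace ((K-1-1) / (K-1) - 1) with (- / (K-1)) in H by (field; lra). lra. }
  assert (Eq : (N - K) / ((K - 1) * (K - 2)) = (N-2)/(K-1-1) - (N-2)/(K-1) - /(K-1)) by (field; lra).
  rewrite Eq. split; lra.
Qed.

Lemma S_bounds (n r : nat) : (2 <= r <= n)%nat ->
  let S := sum_n_m (fun k : nat => (INR n - INR k) / ((INR k - 1) * (INR k - 2))) (S r) n in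
  hL n n - hL n r <= S /\ S <= hU n n - hU n r.
Proof.
  intros H S. split.
  - apply tele_ge; [lia|]. intros k Hk. apply term_bounds; lia.
  - apply tele_le; [lia|]. intros k Hk. apply term_bounds; lia.
Qed.

Definition fF (x : R) : R := 2*x*(1-x) + 2*x^2*ln x.

Lemma div_nn a b : 0 <= a -> 0 < b -> 0 <= a / b.
Proof. intros; apply Rmult_le_pos; [lra| left; apply Rinv_0_lt_compat; lra]. Qed.

Lemma E_approx n r : (2 <= r <= n)%nat -> Rabs (E_BWC n r - fF (INR r / INR n)) <= 10 / INR n.
Proof.
  intros Hr. pose proof (S_bounds n r Hr) as [HL HU].
  unfold E_BWC. set (S := sum_n_m _ _ _) in *.
  unfold hL, hU in *.
  assert (HR : 2 <= INR r) by (replace 2 with (INR 2) by (simpl; lra); apply le_INR; lia).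
  assert (HRN : INR r <= INR n) by (apply le_INR; lia).
  set (R := INR r) in *. set (N := INR n) in *.
  set (c := 2 * R * (R - 1) / N ^ 2).
  assert (Hc : 0 <= c) by (apply div_nn; [nra | nra]).
  set (U := - ((N - 2) / (N - 1)) - ln N - (- ((N - 2) / (R - 1)) - ln R)) in *.
  set (L := - ((N - 2) / (N - 1)) - ln (N - 1) - (- ((N - 2) / (R - 1)) - ln (R - 1))) in *.
  assert (EU : c * S <= c * U) by (apply Rmult_le_compat_l; lra).
  assert (EL : c * L <= c * S) by (apply Rmult_le_compat_l; lra).
  assert (G1 : ln R - ln (R - 1) <= / (R - 1)).
  { rewrite <- ln_div by lra. pose proof (ln_le_sub1 (R / (R-1)) ltac:(apply Rdiv_lt_0_compat; lra)).
    replace (R / (R-1) - 1) with (/ (R-1)) in H by (field; lra). lra. }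
  assert (G2 : ln (N - 1) - ln N <= - / N).
  { rewrite <- ln_div by lra. pose proof (ln_le_sub1 ((N-1) / N) ltac:(apply Rdiv_lt_0_compat; lra)).
    replace ((N-1) / N - 1) with (- / N) in H by (field; lra). lra. }
  assert (UL : U - L <= / (R - 1) - / N) by (unfold U, L; lra).
  assert (cUL : c * (U - L) <= 2 / N).
  { apply Rle_trans with (c * (/ (R - 1) - / N)); [apply Rmult_le_compat_l; lra|].
    unfold c. apply Rminus_le.
    replace (2 * R * (R - 1) / N ^ 2 * (/ (R - 1) - / N) - 2 / N)
      with ((2 * R * (N - R + 1) - 2 * N * N) / N ^ 3) by (field; lra).
    apply Rmult_le_0_r; [nra|]. left; apply Rinv_0_lt_compat; nra. }
  assert (HlnR : ln (R / N) = ln R - ln N) by (apply ln_div; lra).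
  assert (F3a : 0 <= ln N - ln R).
  { assert (ln R <= ln N). { destruct (Req_dec R N) as [->|]; [lra|]. left; apply ln_increasing; lra. } lra. }
  assert (F3b : ln N - ln R <= N / R - 1).
  { rewrite <- ln_div by lra. apply ln_le_sub1. apply Rdiv_lt_0_compat; lra. }
  assert (Eq : c * U - fF (R / N) =
     - (4 * R / N ^ 2) + 2 * R * (R + N - 2) / (N ^ 2 * (N - 1)) + (2 * R / N ^ 2) * (ln N - ln R)).
  { unfold fF. rewrite HlnR. unfold c, U. field. lra. }
  assert (T1 : 0 <= 4 * R / N ^ 2 <= 4 / N).
  { split. apply div_nn; nra. apply Rminus_le.
    replace (4 * R / N ^ 2 - 4 / N) with ((4 * R - 4 * N) / N ^ 2) by (field; lra).
    apply Rmult_le_0_r; [nra|]. left; apply Rinv_0_lt_compat; nra. }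
  assert (T2 : 0 <= 2 * R * (R + N - 2) / (N ^ 2 * (N - 1)) <= 4 / N).
  { split. apply div_nn; nra. apply Rminus_le.
    replace (2 * R * (R + N - 2) / (N ^ 2 * (N - 1)) - 4 / N)
      with ((2 * R * (R + N - 2) - 4 * N * (N - 1)) / (N ^ 2 * (N - 1))) by (field; lra).
    apply Rmult_le_0_r; [nra|]. left; apply Rinv_0_lt_compat; nra. }
  assert (T3 : 0 <= (2 * R / N ^ 2) * (ln N - ln R) <= 2 / N).
  { assert (0 <= 2 * R / N ^ 2) by (apply div_nn; nra). split. nra.
    apply Rle_trans with ((2 * R / N ^ 2) * (N / R - 1)). apply Rmult_le_compat_l; lra.
    apply Rminus_le.
    replace (2 * R / N ^ 2 * (N / R - 1) - 2 / N) with (- 2 * R / N ^ 2) by (field; lra).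
    assert (0 <= 2 * R / N ^ 2) by (apply div_nn; nra). lra. }
  apply Rabs_le. lra.
Qed.

Definition kF (x : R) : R := / x - 1 + 2 * ln x.

Lemma fF_deriv x : 0 < x -> derivable_pt_lim fF x (2 * x * kF x).
Proof.
  intros Hx. apply is_derive_Reals. unfold fF.
  auto_derive. lra. unfold kF. field. lra.
Qed.

Lemma kF_deriv x : 0 < x -> derivable_pt_lim kF x ((2 * x - 1) / x ^ 2).
Proof.
  intros Hx. apply is_derive_Reals. unfold kF.
  auto_derive. lra. field. lra.
Qed.

Lemma theta_props (w theta : R) :
  is_LambertWm1 (- / (2 * sqrt (exp 1))) w -> theta = - / (2 * w) ->
  0 < theta <= 1/2 /\ kF theta = 0.
Proof.
  intros [Hw1 Hw2] Ht.
  assert (Hs : sqrt (exp 1) = exp (1/2)).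
  { replace 1 with (1/2 + 1/2) at 1 by lra. rewrite exp_plus. apply sqrt_square.
    left; apply exp_pos. }
  rewrite Hs in Hw2.
  assert (Hth : 0 < theta <= 1/2).
  { subst theta. split.
    - replace (- / (2 * w)) with (/ (2 * - w)) by (field; lra). apply Rinv_0_lt_compat; lra.
    - replace (- / (2 * w)) with (/ (2 * - w)) by (field; lra).
      replace (1/2) with (/ 2) by lra. apply Rinv_le_contravar; lra. }
  split; auto.
  assert (Hw : w = - / (2 * theta)) by (subst theta; field; lra).
  assert (He : theta = exp (w + 1/2)).
  { rewrite exp_plus. pose proof (exp_pos (1/2)).
    assert (exp w = - / (2 * exp (1/2)) / w) by (rewrite <- Hw2; field; lra).
    rewrite H0. subst theta. field. split; lra. }
  assert (Hl : ln theta = w + 1/2) by (rewrite He; apply ln_exp).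
  unfold kF. rewrite Hl, Hw. field. lra.
Qed.

Section Mono.
Variable theta : R.
Hypothesis Hth : 0 < theta <= 1/2.
Hypothesis Hk : kF theta = 0.

Lemma kF_pos c : 0 < c < theta -> 0 < kF c.
Proof.
  intros Hc. destruct (MVT_cor2 kF (fun x => (2 * x - 1) / x ^ 2) c theta) as [d [Hd1 Hd2]].
  lra. intros; apply kF_deriv; lra.
  assert ((2 * d - 1) / d ^ 2 < 0) by (apply Rdiv_neg_pos; nra).
  assert ((2 * d - 1) / d ^ 2 * (theta - c) < 0) by (apply Rmult_neg_pos; lra). lra.
Qed.

Lemma kF_neg c : theta < c < 1 -> kF c < 0.
Proof.
  intros Hc. destruct (Rle_lt_dec c (1/2)).
  - destruct (MVT_cor2 kF (fun x => (2 * x - 1) / x ^ 2) theta c) as [d [Hd1 Hd2]].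
    lra. intros; apply kF_deriv; lra.
    assert ((2 * d - 1) / d ^ 2 < 0) by (apply Rdiv_neg_pos; nra).
    assert ((2 * d - 1) / d ^ 2 * (c - theta) < 0) by (apply Rmult_neg_pos; lra). lra.
  - destruct (MVT_cor2 kF (fun x => (2 * x - 1) / x ^ 2) c 1) as [d [Hd1 Hd2]].
    lra. intros; apply kF_deriv; lra.
    assert (0 < (2 * d - 1) / d ^ 2) by (apply Rdiv_lt_0_compat; nra).
    assert (0 < (2 * d - 1) / d ^ 2 * (1 - c)) by (apply Rmult_lt_0_compat; lra).
    assert (kF 1 = 0) by (unfold kF; rewrite ln_1; field). lra.
Qed.

Lemma fF_inc a b : 0 < a < b -> b <= theta -> fF a < fF b.
Proof.
  intros Hab Hb. destruct (MVT_cor2 fF (fun x => 2 * x * kF x) a b) as [d [Hd1 Hd2]].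
  lra. intros; apply fF_deriv; lra.
  assert (0 < kF d) by (apply kF_pos; lra).
  assert (0 < 2 * d * kF d * (b - a)) by (apply Rmult_lt_0_compat; [apply Rmult_lt_0_compat|]; lra). lra.
Qed.

Lemma fF_dec a b : theta <= a < b -> b <= 1 -> fF b < fF a.
Proof.
  intros Hab Hb. destruct (MVT_cor2 fF (fun x => 2 * x * kF x) a b) as [d [Hd1 Hd2]].
  lra. intros; apply fF_deriv; lra.
  assert (kF d < 0) by (apply kF_neg; lra).
  assert (2 * d * kF d < 0) by (apply Rmult_pos_neg; lra).
  assert (2 * d * kF d * (b - a) < 0) by (apply Rmult_neg_pos; lra). lra.
Qed.

Lemma fF_max x : 0 < x <= 1 -> fF x <= fF theta.
Proof.
  intros Hx. destruct (Rtotal_order x theta) as [H|[H|H]].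
  - left; apply fF_inc; lra.
  - subst; lra.
  - left; apply fF_dec; lra.
Qed.
End Mono.

Lemma inv_n_lim : is_lim_seq (fun n => / INR n) 0.
Proof.
  pose proof (is_lim_seq_inv INR p_infty is_lim_seq_INR ltac:(discriminate)) as H.
  simpl in H. exact H.
Qed.

Lemma lim_add_small u (l c : R) : is_lim_seq u l -> is_lim_seq (fun n => u n + c / INR n) l.
Proof.
  intros Hu. pose proof (is_lim_seq_scal_l _ c _ inv_n_lim) as H.
  pose proof (is_lim_seq_plus' _ _ _ _ Hu H) as H2. simpl in H2.
  replace (l + c * 0) with l in H2 by ring. exact H2.
Qed.

Lemma floor_props x : 0 <= x -> INR (nat_floor x) <= x < INR (nat_floor x) + 1.
Proof.
  intros Hx. unfold nat_floor. destruct (base_Int_part x) as [H1 H2].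
  assert (Hz : (0 <= Int_part x)%Z).
  { assert (IZR (-1) < IZR (Int_part x)) by (simpl; lra). apply lt_IZR in H. lia. }
  rewrite INR_IZR_INZ, Z2Nat.id by exact Hz. lra.
Qed.

Lemma ev_big (M : R) : exists N, forall n, (N <= n)%nat -> M < INR n.
Proof.
  pose proof (proj2 (is_lim_seq_spec INR p_infty) is_lim_seq_INR M) as [N HN].
  exists N; exact HN.
Qed.

Theorem theorem3 (w theta : R) (M : nat -> nat)
  (Hw : is_LambertWm1 (- / (2 * sqrt (exp 1))) w)
  (Htheta : theta = - / (2 * w))
  (HM : forall n : nat, (2 < n)%nat ->
        (1 < M n)%nat /\ (M n < n)%nat /\
        (forall r : nat, (1 < r)%nat -> (r < n)%nat -> E_BWC n r <= E_BWC n (M n))) :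
  is_lim_seq (fun n : nat => INR (M n) / INR n) theta /\
  is_lim_seq (fun n : nat => E_BWC n (M n)) (theta * (1 - theta)) /\
  is_lim_seq (fun n : nat => E_BWC n (nat_floor (INR n * theta))) (theta * (1 - theta)).
Proof.
  destruct (theta_props w theta Hw Htheta) as [Hth Hk].
  assert (Hf : fF theta = theta * (1 - theta)).
  { unfold kF in Hk. assert (ln theta = (1 - / theta) / 2) by lra.
    unfold fF. rewrite H. field. lra. }
  rewrite <- Hf.
  assert (Hcont : continuity_pt fF theta).
  { apply (derivable_continuous_pt fF theta (exist _ _ (fF_deriv theta ltac:(lra)))). }
  set (rn := fun n => nat_floor (INR n * theta)).
  destruct (ev_big (3 / theta)) as [N0 HN0].
  assert (H3 : 6 <= 3 / theta).
  { apply Rmult_le_reg_r with theta; [lra|]. unfold Rdiv. rewrite Rmult_assoc, Rinv_l; lra. }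
  assert (Hbig : forall n, (N0 <= n)%nat ->
    (2 < n)%nat /\ 0 < INR n /\ (1 < rn n)%nat /\ (rn n < n)%nat /\
    INR n * theta - 1 < INR (rn n) <= INR n * theta).
  { intros n Hn. specialize (HN0 n Hn).
    assert (Hn2 : (2 < n)%nat) by (apply INR_lt; simpl; lra).
    assert (Hnt : 3 < INR n * theta).
    { apply Rmult_lt_reg_r with (/ theta). apply Rinv_0_lt_compat; lra.
      rewrite Rmult_assoc, Rinv_r by lra. lra. }
    pose proof (floor_props (INR n * theta) ltac:(lra)) as Hfl. fold (rn n) in Hfl.
    repeat split; try lra; try assumption.
    - apply INR_lt. simpl; lra.
    - apply INR_lt. nra. }
  assert (Lrn : is_lim_seq (fun n => INR (rn n) / INR n) theta).
  { apply is_lim_seq_le_le_loc with (u := fun n => theta + (-1) / INR n) (w := fun n => theta + 0 / INR n).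
    - exists N0. intros n Hn. destruct (Hbig n Hn) as (_ & Hn0 & _ & _ & Hr1 & Hr2).
      split.
      + apply Rmult_le_reg_r with (INR n); [lra|]. unfold Rdiv.
        rewrite Rmult_plus_distr_r, !Rmult_assoc, Rinv_l by lra. lra.
      + apply Rmult_le_reg_r with (INR n); [lra|]. unfold Rdiv.
        rewrite Rmult_plus_distr_r, !Rmult_assoc, Rinv_l by lra. lra.
    - apply lim_add_small, is_lim_seq_const.
    - apply lim_add_small, is_lim_seq_const. }
  assert (Lfrn : is_lim_seq (fun n => fF (INR (rn n) / INR n)) (fF theta)).
  { apply (is_lim_seq_continuous fF _ theta Hcont Lrn). }
  assert (P3 : is_lim_seq (fun n => E_BWC n (rn n)) (fF theta)).
  { apply is_lim_seq_le_le_loc with (u := fun n => fF (INR (rn n) / INR n) + (-10) / INR n)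
      (w := fun n => fF (INR (rn n) / INR n) + 10 / INR n).
    - exists N0. intros n Hn. destruct (Hbig n Hn) as (_ & Hn0 & Hr1 & Hr2 & _).
      pose proof (E_approx n (rn n) ltac:(lia)) as HE. apply Rabs_le_between in HE.
      unfold Rdiv in *. lra.
    - apply lim_add_small, Lfrn.
    - apply lim_add_small, Lfrn. }
  assert (P2 : is_lim_seq (fun n => E_BWC n (M n)) (fF theta)).
  { apply is_lim_seq_le_le_loc with (u := fun n => E_BWC n (rn n))
      (w := fun n => fF theta + 10 / INR n).
    - exists N0. intros n Hn. destruct (Hbig n Hn) as (Hn2 & Hn0 & Hr1 & Hr2 & _).
      destruct (HM n Hn2) as (HM1 & HM2 & HM3). split.
      + apply HM3; assumption.
      + pose proof (E_approx n (M n) ltac:(lia)) as HE. apply Rabs_le_between in HE.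
        assert (fF (INR (M n) / INR n) <= fF theta).
        { apply (fF_max theta Hth Hk).
          assert (INR 1 < INR (M n)) by (apply lt_INR; lia).
          assert (INR (M n) < INR n) by (apply lt_INR; lia). simpl in *.
          split. apply Rdiv_lt_0_compat; lra.
          apply Rmult_le_reg_r with (INR n); [lra|]. unfold Rdiv.
          rewrite Rmult_assoc, Rinv_l by lra. lra. }
        unfold Rdiv in *. lra.
    - exact P3.
    - apply lim_add_small, is_lim_seq_const. }
  split; [|split; [exact P2|exact P3]].
  assert (Lg : is_lim_seq (fun n => E_BWC n (M n) + (-10) / INR n) (fF theta))
    by (apply lim_add_small, P2).
  apply is_lim_seq_spec in Lg. apply is_lim_seq_spec. intros eps.
  set (e := Rmin eps (theta / 2)).
  assert (He1 : 0 < e) by (unfold e; apply Rmin_pos; [apply cond_pos|lra]).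
  assert (He2 : e <= eps) by apply Rmin_l.
  assert (He3 : e <= theta / 2) by apply Rmin_r.
  assert (D1 : fF (theta - e) < fF theta) by (apply (fF_inc theta Hth Hk); lra).
  assert (D2 : fF (theta + e) < fF theta) by (apply (fF_dec theta Hth Hk); lra).
  set (d := Rmin (fF theta - fF (theta - e)) (fF theta - fF (theta + e))).
  assert (Hd : 0 < d) by (unfold d; apply Rmin_pos; lra).
  assert (Hd1 : d <= fF theta - fF (theta - e)) by apply Rmin_l.
  assert (Hd2 : d <= fF theta - fF (theta + e)) by apply Rmin_r.
  destruct (Lg (mkposreal d Hd)) as [N1 HN1].
  exists (Nat.max N0 N1). intros n Hn.
  destruct (Hbig n ltac:(lia)) as (Hn2 & Hn0 & _ & _ & _).
  specialize (HN1 n ltac:(lia)). simpl in HN1. apply Rabs_lt_between in HN1.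
  destruct (HM n Hn2) as (HM1 & HM2 & _).
  pose proof (E_approx n (M n) ltac:(lia)) as HE. apply Rabs_le_between in HE.
  set (x := INR (M n) / INR n) in *.
  assert (Hx : 0 < x <= 1).
  { assert (INR 1 < INR (M n)) by (apply lt_INR; lia).
    assert (INR (M n) < INR n) by (apply lt_INR; lia). simpl in *.
    split. apply Rdiv_lt_0_compat; lra.
    apply Rmult_le_reg_r with (INR n); [lra|]. unfold x, Rdiv.
    rewrite Rmult_assoc, Rinv_l by lra. lra. }
  assert (Hfx : fF theta - d < fF x) by (unfold Rdiv in *; lra).
  apply Rabs_lt_between. split.
  - destruct (Rlt_or_le (theta - e) x) as [H|H]; [lra|].
    exfalso. assert (fF x <= fF (theta - e)).
    { destruct (Req_dec x (theta - e)) as [->|]; [lra|]. left; apply (fF_inc theta Hth Hk); lra. }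
    lra.
  - destruct (Rlt_or_le x (theta + e)) as [H|H]; [lra|].
    exfalso. assert (fF x <= fF (theta + e)).
    { destruct (Req_dec x (theta + e)) as [->|]; [lra|]. left; apply (fF_dec theta Hth Hk); lra. }
    lra.
Qed.
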